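(* Let $p$ be one of $(123,\emptyset,\{0,1,2\})$, $(123,\emptyset,\{0,1,3\})$, $(132,\emptyset,\{0,1,2\})$, $(132,\emptyset,\{0,1,3\})$, $(132,\emptyset,\{0,2,3\})$, $(132,\emptyset,\{1,2,3\})$, or any pattern in the same symmetry class as one of these. Then for all $n\ge3$, $a_n(p)=\frac56\,n!$.
   Context: For $n\ge1$, $\mathcal S_n$ is the set of permutations $\pi=\pi_1\cdots\pi_n$ of $[n]$. A bi-vincular pattern of length $k$ is a triple $p=(\sigma,X,Y)$ with $\sigma\in\mathcal S_k$ and $X,Y\subseteq\{0,1,\dots,k\}$. A permutation $\pi\in\mathcal S_n$ contains $p$ if there are indices $1\le i_1<\dots<i_k\le n$ such that $(\pi_{i_1},\dots,\pi_{i_k})$ is order-isomorphic to $\sigma$ and, letting $j_1<\dots<j_k$ be the values $\pi_{i_1},\dots,\pi_{i_k}$ sorted increasingly and setting $i_0=j_0=0$, $i_{k+1}=j_{k+1}=n+1$, one has $i_{x+1}=i_x+1$ for all $x\in X$ and $j_{y+1}=j_y+1$ for all $y\in Y$. Otherwise $\pi$ avoids $p$; $a_n(p)$ is the number of $\pi\in\mathcal S_n$ avoiding $p$. Symmetries: $p^{i}=(\sigma^{-1},Y,X)$, $p^{r}=(\sigma^{r},\{k-x:x\in X\},Y)$, $p^{c}=(\sigma^{c},X,\{k-y:y\in Y\})$ with $\sigma^r_j=\sigma_{k+1-j}$, $\sigma^c_j=k+1-\sigma_j$; the symmetry class of $p$ consists of all patterns obtained from $p$ by finitely many applications of these maps.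 *)

(* Defs.v *)
From HB Require Import structures.
From mathcomp Require Import all_boot all_order all_algebra all_fingroup.
From Stdlib Require List.
Set Implicit Arguments. Unset Strict Implicit. Unset Printing Implicit Defensive.

(* Conventions: a permutation pi of [n] is represented by s : 'S_n (on 'I_n =
   {0..n-1}) via pi_i = (s (i-1)) + 1 for i in [n] (1-based).
   A bi-vincular pattern of length k is (sigma, X, Y) with sigma : 'S_k
   (sigma_j = (sig (j-1)) + 1) and X, Y subsets of {0,...,k} = 'I_k.+1. *)

Record bvpat (k : nat) := BVPat {
  psig : 'S_k;
  pX : {set 'I_k.+1};
  pY : {set 'I_k.+1}
}.

(* An occurrence is given by f : 'I_k -> 'I_n (0-based positions);
   i_{a+1} = (f a) + 1 in 1-based indexing. *)

(* extended list of positions: i_0 = 0, i_1 .. i_k, i_{k+1} = n+1 *)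
Definition ext_pos (n k : nat) (f : {ffun 'I_k -> 'I_n}) : seq nat :=
  0 :: [seq (f a).+1 | a <- enum 'I_k] ++ [:: n.+1].

(* extended sorted list of values: j_0 = 0, j_1 < ... < j_k the values
   pi_{i_1},...,pi_{i_k} sorted increasingly, j_{k+1} = n+1 *)
Definition ext_val (n k : nat) (s : 'S_n) (f : {ffun 'I_k -> 'I_n}) : seq nat :=
  0 :: sort leq [seq (s (f a)).+1 | a <- enum 'I_k] ++ [:: n.+1].

Definition contains (n k : nat) (s : 'S_n) (p : bvpat k) : bool :=
  [exists f : {ffun 'I_k -> 'I_n},
    [&& [forall a : 'I_k, forall b : 'I_k, (a < b) ==> (f a < f b)],
        [forall a : 'I_k, forall b : 'I_k,
            (s (f a) < s (f b)) == (psig p a < psig p b)],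
        [forall x : 'I_k.+1, (x \in pX p) ==>
            (nth 0 (ext_pos f) x.+1 == (nth 0 (ext_pos f) x).+1)] &
        [forall y : 'I_k.+1, (y \in pY p) ==>
            (nth 0 (ext_val s f) y.+1 == (nth 0 (ext_val s f) y).+1)]]].

Definition avoids (n k : nat) (s : 'S_n) (p : bvpat k) : bool := ~~ contains s p.

Definition a_n (n k : nat) (p : bvpat k) : nat := #|[set s : 'S_n | avoids s p]|.

Definition rev_perm (k : nat) : 'S_k := perm (@rev_ord_inj k).

(* sigma^r_j = sigma_{k+1-j} ; in MathComp (s * t) x = t (s x) *)
Definition sig_r (k : nat) (s : 'S_k) : 'S_k := rev_perm k * s.
(* sigma^c_j = k+1-sigma_j *)
Definition sig_c (k : nat) (s : 'S_k) : 'S_k := s * rev_perm k.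

Definition set_rev (k : nat) (X : {set 'I_k.+1}) : {set 'I_k.+1} :=
  [set rev_ord x | x in X].

Definition pat_i (k : nat) (p : bvpat k) : bvpat k :=
  BVPat (psig p)^-1 (pY p) (pX p).
Definition pat_r (k : nat) (p : bvpat k) : bvpat k :=
  BVPat (sig_r (psig p)) (set_rev (pX p)) (pY p).
Definition pat_c (k : nat) (p : bvpat k) : bvpat k :=
  BVPat (sig_c (psig p)) (pX p) (set_rev (pY p)).

Inductive sym_class (k : nat) (p : bvpat k) : bvpat k -> Prop :=
| sc_refl : sym_class p p
| sc_i q : sym_class p q -> sym_class p (pat_i q)
| sc_r q : sym_class p q -> sym_class p (pat_r q)
| sc_c q : sym_class p q -> sym_class p (pat_c q).

Definition s123 : 'S_3 := 1%g.
Definition s132 : 'S_3 := tperm (inord 1 : 'I_3) (inord 2).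

Definition set3 (a b c : nat) : {set 'I_4} := [set inord a; inord b; inord c].

Definition base_patterns : seq (bvpat 3) :=
  [:: BVPat s123 set0 (set3 0 1 2);
      BVPat s123 set0 (set3 0 1 3);
      BVPat s132 set0 (set3 0 1 2);
      BVPat s132 set0 (set3 0 1 3);
      BVPat s132 set0 (set3 0 2 3);
      BVPat s132 set0 (set3 1 2 3)].

Definition is_base_pattern (q : bvpat 3) : Prop := List.In q base_patterns.

(* Main.v *)
Require Import Defs.
From HB Require Import structures.
From mathcomp Require Import all_boot all_order all_algebra all_fingroup.
From mathcomp Require Import zify ring.
Set Implicit Arguments. Unset Strict Implicit. Unset Printing Implicit Defensive.

Lemma card_lt_ord k m : m <= k -> #|[set v : 'I_k | v < m]| = m.
Proof.
move=> mk.
have inj : injective (fun i : 'I_m => widen_ord mk i).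
  by move=> i j /(congr1 val) /= /val_inj.
rewrite -[RHS](card_ord m) -(card_imset _ inj); apply: eq_card => v; rewrite inE.
apply/idP/imsetP => [vm|[i _ ->]]; last by rewrite /= ltn_ord.
by exists (Ordinal vm) => //; apply/val_inj.
Qed.

Lemma rank_inj k (g : 'I_k -> 'I_k) (i : 'I_k) :
  injective g -> #|[set j | g j < g i]| = g i.
Proof.
move=> ig.
have -> : [set j | g j < g i] = g @^-1: [set v : 'I_k | v < g i].
  by apply/setP => j; rewrite !inE.
by rewrite card_preimset // card_lt_ord // ltnW.
Qed.

Lemma order_uniq k (g : 'I_k -> 'I_k) (s : 'S_k) :
  (forall i j, (g i < g j) = (s i < s j)) -> forall i, g i = s i.
Proof.
move=> H.
have ig : injective g.
  move=> i j E; apply: (@perm_inj _ s); apply/val_inj.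
  move: (H i j) (H j i); rewrite E ltnn.
  by case: (ltngtP (s i) (s j)).
move=> i; apply/val_inj.
rewrite /= -(rank_inj i ig) -(rank_inj i (@perm_inj _ s)); apply: eq_card => j.
by rewrite !inE H.
Qed.

Lemma rank_exists k (x : 'I_k -> nat) : injective x ->
  exists s : 'S_k, forall i j, (x i < x j) = (s i < s j).
Proof.
move=> ix.
pose r i := #|[set j | x j < x i]|.
have rlt : forall i, r i < k.
  move=> i; rewrite -[k]card_ord /r; apply: proper_card.
  apply/properP; split; first by apply/subsetP.
  by exists i; rewrite ?inE ?ltnn.
have mono : forall i j, x i < x j -> r i < r j.
  move=> i j xij; apply: proper_card; apply/properP; split.
    by apply/subsetP => l; rewrite !inE => /ltn_trans; apply.
  by exists i; rewrite !inE ?ltnn.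
have rE : forall i j, (x i < x j) = (r i < r j).
  move=> i j; case: (ltngtP (x i) (x j)) => [/mono -> //| /mono h|/ix ->].
    by apply/esym/negbTE; rewrite -leqNgt ltnW.
  by rewrite ltnn.
pose g i := Ordinal (rlt i).
have ig : injective g.
  move=> i j /(congr1 val) /= E; apply/ix.
  move: (rE i j) (rE j i); rewrite E ltnn.
  by case: (ltngtP (x i) (x j)).
exists (perm ig) => i j; by rewrite !permE rE.
Qed.

Definition iso n k (s : 'S_n) (a : 'I_k -> 'I_n) (sg : 'S_k) : bool :=
  [forall i, forall j, (s (a i) < s (a j)) == (sg i < sg j)].

Lemma ext_perm n k (a : 'I_k -> 'I_n) (sg : 'S_k) : injective a ->
  exists t : 'S_n, forall i, t (a i) = a (sg i).
Proof.
move=> ia.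
pose f x := if [pick i | a i == x] is Some i then a (sg i) else x.
have fa : forall i, f (a i) = a (sg i).
  move=> i; rewrite /f; case: pickP => [j /eqP/ia -> //|/(_ i)].
  by rewrite eqxx.
have fi : injective f.
  move=> x y; rewrite /f.
  case: pickP => [i /eqP <-|Nx]; case: pickP => [j /eqP <-|Ny].
  - by move/ia/perm_inj ->.
  - by move=> E; move: (Ny (sg i)); rewrite E eqxx.
  - by move=> E; move: (Nx (sg j)); rewrite -E eqxx.
  - by [].
by exists (perm fi) => i; rewrite permE fa.
Qed.

Lemma iso_card n k (a : 'I_k -> 'I_n) (sg : 'S_k) : injective a ->
  #|[set s | iso s a sg]| = #|[set s | iso s a 1]|.
Proof.
move=> ia; have [t tE] := ext_perm (sg^-1)%g ia.
rewrite -[RHS](card_preimset _ (@mulgI _ t)); apply: eq_card => s.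
rewrite !inE /iso; apply/forallP/forallP => H i; apply/forallP => j.
- move: (forallP (H (sg^-1 i)%g) (sg^-1 j)%g).
  by rewrite !permM !tE !permKV !perm1.
- move: (forallP (H (sg i)) (sg j)).
  by rewrite !permM !tE !permK !perm1.
Qed.

Lemma count_iso n k (a : 'I_k -> 'I_n) (sg : 'S_k) : injective a ->
  #|[set s | iso s a sg]| * k`! = n`!.
Proof.
move=> ia.
have one : forall s : 'S_n, \sum_(r : 'S_k) (iso s a r : nat) = 1.
  move=> s.
  have xi : injective (fun i => val (s (a i))).
    by move=> i j /val_inj /perm_inj /ia.
  have [r0 r0E] := rank_exists xi.
  rewrite (bigD1 r0) //= big1.
    rewrite addn0; suff -> : iso s a r0 by [].
    by apply/forallP => i; apply/forallP => j; rewrite r0E.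
  move=> r rr0; apply/eqP; rewrite eqb0; apply: contra rr0 => H.
  apply/eqP/permP => i; apply: order_uniq => {}i j.
  rewrite -r0E /=; by move/forallP: H => /(_ i) /forallP /(_ j) /eqP ->.
have E1 : \sum_(s : 'S_n) 1 = n`!.
  by rewrite -card_Sn -sum1_card.
rewrite -E1.
rewrite (eq_bigr (fun s => \sum_(r : 'S_k) (iso s a r : nat))); last by move=> s _; rewrite one.
rewrite exchange_big /=.
rewrite (eq_bigr (fun r => #|[set s | iso s a sg]|)).
  by rewrite sum_nat_const card_Sn mulnC.
move=> r _; rewrite (iso_card sg ia) -(iso_card r ia) -sum1_card [RHS]big_mkcond /=.
by apply: eq_bigr => s _; rewrite inE; case: iso.
Qed.

Definition am (n' m : nat) (i : 'I_3) : 'I_(n'.+3) :=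
  inord (if i < m then nat_of_ord i else n' + i).

Lemma am_val n' m i : (am n' m i : nat) = if i < m then nat_of_ord i else n' + i.
Proof.
rewrite inordK //; have := ltn_ord i; case: ifP => _; lia.
Qed.

Lemma am_lt n' m i j : (am n' m i < am n' m j) = (i < j).
Proof.
rewrite !am_val; have := ltn_ord i; have := ltn_ord j.
by case: ifP; case: ifP; move=> h1 h2 h3 h4; apply/idP/idP; lia.
Qed.

Lemma am_inj n' m : injective (am n' m).
Proof.
move=> i j E; apply/val_inj.
move: (am_lt n' m i j) (am_lt n' m j i); rewrite E ltnn.
by case: ltngtP.
Qed.

Notation o0 := (@Ordinal 3 0 isT).
Notation o1 := (@Ordinal 3 1 isT).
Notation o2 := (@Ordinal 3 2 isT).

Lemma enum3 : enum 'I_3 = [:: o0; o1; o2].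
Proof. by apply: (inj_map val_inj); rewrite val_enum_ord. Qed.

Lemma forall4 (P : pred 'I_4) :
  [forall x, P x] = [&& P (@Ordinal 4 0 isT), P (@Ordinal 4 1 isT),
                        P (@Ordinal 4 2 isT) & P (@Ordinal 4 3 isT)].
Proof.
apply/forallP/and4P => [H|[H0 H1 H2 H3]]; first by split; apply: H.
by case=> [[|[|[|[|//]]]] Hx]; rewrite (eq_irrelevance Hx isT).
Qed.

Lemma forall3 (P : 'I_3 -> Prop) :
  (forall x, P x) <-> [/\ P o0, P o1 & P o2].
Proof.
split => [H|[H0 H1 H2]]; first by split; apply: H.
by case=> [[|[|[|//]]] Hx]; rewrite (eq_irrelevance Hx isT).
Qed.

Definition chainP (m : 'I_4) (L : seq nat) :=
  [forall x : 'I_4, (x \in ~:[set m]) ==> (nth 0 L x.+1 == (nth 0 L x).+1)].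

Ltac crush := repeat match goal with
 | H : is_true (_ && _) |- _ => case/andP: H => ? ?
 | H : is_true (_ == _ :> nat) |- _ => move/eqP: H => ?
 | H : is_true true |- _ => clear H
 | |- is_true (_ && _) => apply/andP; split
 | |- is_true (_ == _ :> nat) => apply/eqP
 end; try lia.

Lemma chainE n' m e0 e1 e2 :
  chainP m [:: 0; e0; e1; e2; n'.+4] =
  [&& e0 == (am n' m o0).+1, e1 == (am n' m o1).+1 & e2 == (am n' m o2).+1].
Proof.
rewrite /chainP forall4 !inE !am_val.
case: m => [[|[|[|[|//]]]] Hm] /=; apply/idP/idP; 
  move=> H; crush.
Qed.

Lemma ext_posE n (f : {ffun 'I_3 -> 'I_n}) :
  ext_pos f = [:: 0; (f o0).+1; (f o1).+1; (f o2).+1; n.+1].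
Proof. by rewrite /ext_pos enum3. Qed.

Lemma inc_lt n (f : 'I_3 -> 'I_n) :
  [forall a : 'I_3, forall b : 'I_3, (a < b) ==> (f a < f b)] ->
  forall i j, (f i < f j) = (i < j).
Proof.
move=> H i j.
have h : forall a b : 'I_3, a < b -> f a < f b.
  by move=> a b ab; move/forallP: H => /(_ a) /forallP /(_ b); rewrite ab.
case: (ltngtP i j) => [/h //|/h hij|/val_inj ->]; last by rewrite ltnn.
by apply/negbTE; rewrite -leqNgt ltnW.
Qed.

Lemma containsX n' (p : bvpat 3) (m : 'I_4) :
  pX p = ~:[set m] -> pY p = set0 -> forall s : 'S_(n'.+3),
  contains s p = iso s (am n' m) (psig p).
Proof.
move=> Xp Yp s; rewrite /contains Xp Yp.
apply/existsP/idP => [[f /and4P[inc isf Xc _]]|H].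
  move: Xc; rewrite ext_posE -/(chainP m _) chainE => /and3P[/eqP e0 /eqP e1 /eqP e2].
  have fE : forall i, f i = am n' m i.
    by apply/forall3; split; apply/val_inj; apply: succn_inj.
  by rewrite /iso; under eq_forallb => i do under eq_forallb => j do rewrite -!fE.
exists [ffun i => am n' m i]; apply/and4P; split.
- by apply/forallP => a; apply/forallP => b; rewrite !ffunE am_lt; apply/implyP.
- by rewrite /iso in H; under eq_forallb => i do under eq_forallb => j do rewrite !ffunE.
- by rewrite ext_posE -/(chainP m _) chainE !ffunE !eqxx.
- by apply/forallP => y; rewrite inE.
Qed.

Lemma sortA n' m :
  sort leq [seq (am n' m j).+1 | j <- enum 'I_3] =
  [seq (am n' m j).+1 | j <- enum 'I_3].
Proof.
apply: sorted_sort; first exact: leq_trans.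
have h1 : am n' m o0 < am n' m o1 by rewrite am_lt.
have h2 : am n' m o1 < am n' m o2 by rewrite am_lt.
by rewrite enum3 /= !ltnS (ltnW h1) (ltnW h2).
Qed.

Lemma containsY n' (p : bvpat 3) (m : 'I_4) :
  pX p = set0 -> pY p = ~:[set m] -> forall s : 'S_(n'.+3),
  contains s p = iso (s^-1)%g (fun i => am n' m (psig p i)) 1.
Proof.
move=> Xp Yp s; rewrite /contains Xp Yp.
set sg := psig p.
apply/existsP/idP => [[f /and4P[inc isf _ Yc]]|H].
  move: Yc; rewrite /ext_val.
  set L := [seq (s (f a)).+1 | a <- enum 'I_3].
  have szS : size (sort leq L) = 3 by rewrite size_sort size_map size_enum_ord.
  have pS : perm_eq (sort leq L) L by rewrite perm_sort.
  move: szS pS; case: (sort leq L) => [|u0 [|u1 [|u2 [|? ?]]]] // _ pS.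
  rewrite -/(chainP m _) /= chainE => /and3P[/eqP e0 /eqP e1 /eqP e2].
  have memA : forall i, (s (f i)).+1 \in [seq (am n' m j).+1 | j <- enum 'I_3].
    move=> i; rewrite enum3 /= -e0 -e1 -e2 -[_ :: _]/[:: u0; u1; u2] (perm_mem pS).
    by apply: map_f; rewrite mem_enum.
  have [g gE] : exists g : 'I_3 -> 'I_3, forall i, s (f i) = am n' m (g i).
    apply: (@fin_all_exists _ (fun _ => 'I_3) (fun i j => s (f i) = am n' m j)) => i.
    case/mapP: (memA i) => j _ [E].
    by exists j; apply/val_inj.
  have gs : forall i, g i = sg i.
    apply: order_uniq => i j.
    move/forallP: isf => /(_ i) /forallP /(_ j) /eqP <-.
    by rewrite !gE am_lt.
  apply/forallP => i; apply/forallP => j.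
  by rewrite !perm1 -!gs -!gE !permK (inc_lt inc).
exists [ffun i => (s^-1)%g (am n' m (sg i))]; apply/and4P; split.
- apply/forallP => a; apply/forallP => b; rewrite !ffunE; apply/implyP => ab.
  by move/forallP: H => /(_ a) /forallP /(_ b); rewrite !perm1 ab => /eqP.
- by apply/forallP => a; apply/forallP => b; rewrite !ffunE !permKV am_lt.
- by apply/forallP => y; rewrite inE.
- rewrite /ext_val.
  have -> : sort leq [seq (s ([ffun i => (s^-1)%g (am n' m (sg i))] a)).+1 | a <- enum 'I_3]
            = [seq (am n' m j).+1 | j <- enum 'I_3].
    rewrite -[RHS]sortA; apply/perm_sortP; [exact: leq_total|exact: leq_trans|exact: anti_leq|].
    have -> : [seq (s ([ffun i => (s^-1)%g (am n' m (sg i))] a)).+1 | a <- enum 'I_3]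
      = [seq (am n' m j).+1 | j <- [seq sg a | a <- enum 'I_3]].
      by rewrite -[RHS]map_comp; apply: eq_map => a; rewrite /= ffunE permKV.
    apply: perm_map; apply: uniq_perm.
    + by rewrite map_inj_uniq ?enum_uniq //; apply: perm_inj.
    + exact: enum_uniq.
    + move=> x; rewrite mem_enum; apply/mapP; exists ((sg^-1)%g x); rewrite ?mem_enum ?permKV //.
  by rewrite enum3 -/(chainP m _) /= chainE !eqxx.
Qed.

Definition Inv (p : bvpat 3) :=
  (pY p = set0 /\ #|pX p| = 3) \/ (pX p = set0 /\ #|pY p| = 3).

Lemma set_rev0 k : set_rev (set0 : {set 'I_k.+1}) = set0.
Proof. by rewrite /set_rev imset0. Qed.

Lemma card_set_rev k (X : {set 'I_k.+1}) : #|set_rev X| = #|X|.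
Proof. by rewrite /set_rev card_imset //; exact: rev_ord_inj. Qed.

Lemma inv_class q p : sym_class q p -> Inv q -> Inv p.
Proof.
move=> sc Iq; elim: sc => //= r _ [[h1 h2]|[h1 h2]].
all: first [by left; rewrite /= ?h1 ?set_rev0 ?card_set_rev | by right; rewrite /= ?h1 ?set_rev0 ?card_set_rev].
Qed.

Lemma set3C a b c d : a < 4 -> b < 4 -> c < 4 -> d < 4 ->
  (forall x : nat, x < 4 -> (x == a) || (x == b) || (x == c) = (x != d)) ->
  #|set3 a b c| = 3.
Proof.
move=> ha hb hc hd H.
have -> : set3 a b c = ~: [set inord d].
  apply/setP => x; rewrite /set3 !inE -!val_eqE /= !inordK //; exact: H.
by rewrite cardsC1 card_ord.
Qed.

Lemma inv_base q : is_base_pattern q -> Inv q.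
Proof.
rewrite /is_base_pattern /=.
do ! (case=> [<-|]).
all: right; split => //; first [
  (apply: (@set3C _ _ _ 3) => // x; by case: x => [|[|[|[|x]]]]) |
  (apply: (@set3C _ _ _ 2) => // x; by case: x => [|[|[|[|x]]]]) |
  (apply: (@set3C _ _ _ 1) => // x; by case: x => [|[|[|[|x]]]]) |
  (apply: (@set3C _ _ _ 0) => // x; by case: x => [|[|[|[|x]]]]) ].
Qed.


Lemma inv_m (X : {set 'I_4}) : #|X| = 3 -> exists m, X = ~: [set m].
Proof.
move=> h; have : #|~: X| == 1 by rewrite cardsCs setCK card_ord h.
by case/cards1P => m hm; exists m; rewrite -hm setCK.
Qed.

Lemma count_contains n' (p : bvpat 3) : Inv p ->
  #|[set s : 'S_(n'.+3) | contains s p]| * 3`! = (n'.+3)`!.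
Proof.
case=> [[hY /inv_m [m hX]]|[hX /inv_m [m hY]]].
  rewrite -(count_iso (psig p) (@am_inj n' m)); congr (_ * _).
  by apply: eq_card => s; rewrite !inE (containsX hX hY).
have ia : injective (fun i => am n' m (psig p i)).
  by move=> i j /am_inj /perm_inj.
rewrite -(count_iso 1 ia); congr (_ * _).
rewrite -[RHS](card_preimset _ (@invg_inj {perm 'I_(n'.+3)})).
by apply: eq_card => s; rewrite !inE (containsY hX hY).
Qed.

Unset Implicit Arguments.

Theorem mainTheorem15 (p : bvpat 3) :
  (exists2 q, is_base_pattern q & sym_class q p) ->
  forall n : nat, (3 <= n)%N ->
    ((a_n n p)%:R : rat) = ((5%:R / 6%:R) * (n`!)%:R)%R.
Proof.
case=> q /inv_base Iq sc; have Ip := inv_class sc Iq.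
case=> [|[|[|n']]] // _.
have hc := count_contains n' Ip.
have hs : a_n n'.+3 p + #|[set s : 'S_(n'.+3) | contains s p]| = (n'.+3)`!.
  rewrite -card_Sn -(cardsC [set s : 'S_(n'.+3) | contains s p]) addnC.
  congr (_ + _); apply: eq_card => s; by rewrite !inE.
move: hc hs; rewrite (_ : 3`! = 6) //.
set c := #|_|; set a := a_n _ _; set F := _`! => hc hs.
have -> : a = (5 * c)%N by lia.
rewrite -hc !GRing.natrM; field. all: by [].
Qed.
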